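(* Let $k\in\mathbb{N}$. The only isometric multiplication operators on $\mathcal{L}^{(k)}$, and the only isometric multiplication operators on $\mathcal{L}^{(k)}_0$, are those $M_\psi$ whose symbol $\psi$ is a constant function of modulus one.
   Context: $T$ is a tree (locally finite, connected, simply connected graph, identified with its vertex set) without terminal vertices, rooted at $o$. $|v|$ is the distance from $o$ to $v$; for $v\ne o$, $v^-$ is the parent of $v$. $T^*=T\setminus\{o\}$, $Df(v)=|f(v)-f(v^-)|$. For $x\ge1$: $\ell_0(x)=1$, $\ell_1(x)=1+\ln x$, $\ell_j(x)=1+\ln\ell_{j-1}(x)$ for $j\ge2$. $\mathcal{L}^{(k)}$ is the space of $f:T\to\mathbb{C}$ with $\sup_{v\in T^*}|v|\prod_{j=0}^{k-1}\ell_j(|v|)Df(v)<\infty$, normed by $\|f\|_k=|f(o)|+\sup_{v\in T^*}|v|\prod_{j=0}^{k-1}\ell_j(|v|)Df(v)$; $\mathcal{L}^{(k)}_0$ is its subspace of $f$ with $|v|\prod_{j=0}^{k-1}\ell_j(|v|)Df(v)\to0$ as $|v|\to\infty$. $M_\psi f=\psi f$; an isometric multiplication operator on $X$ is one with $M_\psi(X)\subseteq X$ and $\|\psi f\|_k=\|f\|_k$ for all $f\in X$. *)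

(* Defs.v *)
From Stdlib Require Import Reals List.
From Coquelicot Require Import Coquelicot.
Open Scope R_scope.

(* A rooted tree T (locally finite, connected, simply connected, without
   terminal vertices), encoded by its parent map.  [depth v] is the distance
   |v| from the root o; the axioms on [depth] force every vertex to reach the
   root by iterating [par] (connectedness), and the graph whose edges are
   {v, par v} (v <> o) is automatically simply connected. *)
Record rooted_tree := {
  vert : Type;
  root : vert;
  par : vert -> vert;                       (* v^- for v <> o; junk at o *)
  depth : vert -> nat;
  depth_root : depth root = 0%nat;
  depth_par : forall v, v <> root -> depth v = S (depth (par v));
  loc_finite : forall v, exists s : list vert,
      forall w, (w <> root /\ par w = v) <-> In w s;
  (* no terminal vertices (no vertex with exactly one neighbour):
     a non-root vertex has at least one child (besides its parent), and the
     root does not have exactly one child *)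
  no_terminal_nonroot : forall v, v <> root -> exists w, w <> root /\ par w = v;
  no_terminal_root : ~ (exists c, forall w, (w <> root /\ par w = root) <-> w = c)
}.

Fixpoint ell (j : nat) (x : R) : R :=
  match j with
  | O => 1
  | S O => 1 + ln x
  | S j' => 1 + ln (ell j' x)
  end.

Fixpoint prod_ell (k : nat) (x : R) : R :=
  match k with
  | O => 1
  | S k' => prod_ell k' x * ell k' x
  end.

Definition weight (k : nat) (n : nat) : R := INR n * prod_ell k (INR n).

Definition Dif (T : rooted_tree) (f : vert T -> C) (v : vert T) : R :=
  Cmod (Cminus (f v) (f (par T v))).

Definition wD (T : rooted_tree) (k : nat) (f : vert T -> C) (v : vert T) : R :=
  weight k (depth T v) * Dif T f v.

Definition in_Lk (T : rooted_tree) (k : nat) (f : vert T -> C) : Prop :=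
  exists M : R, forall v, v <> root T -> wD T k f v <= M.

Definition in_Lk0 (T : rooted_tree) (k : nat) (f : vert T -> C) : Prop :=
  in_Lk T k f /\
  forall eps : R, 0 < eps -> exists N : nat,
    forall v, v <> root T -> (N <= depth T v)%nat -> wD T k f v < eps.

(* ||f||_k = |f(o)| + sup_{v in T^*} w(|v|) Df(v).  The value 0 is added to the
   set to make the sup 0 when T^* is empty (harmless, all terms are >= 0). *)
Definition norm_k (T : rooted_tree) (k : nat) (f : vert T -> C) : R :=
  Cmod (f (root T)) +
  real (Lub_Rbar (fun x => x = 0 \/ exists v, v <> root T /\ x = wD T k f v)).

Definition isometric_mult (T : rooted_tree) (k : nat)
    (X : (vert T -> C) -> Prop) (psi : vert T -> C) : Prop :=
  (forall f, X f -> X (fun v => Cmult (psi v) (f v))) /\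
  (forall f, X f -> norm_k T k (fun v => Cmult (psi v) (f v)) = norm_k T k f).

(* Main.v *)
Require Import Defs.
From Stdlib Require Import Reals List.
From Coquelicot Require Import Coquelicot.
From Stdlib Require Import Lra Lia Classical ClassicalEpsilon FunctionalExtensionality.

Lemma ell_ge1 : forall j x, 1 <= x -> 1 <= ell j x.
Proof.
  intros j x Hx. induction j as [|j IH]; simpl; [lra|].
  destruct j as [|j].
  - assert (0 <= ln x) by (rewrite <- ln_1; apply ln_le; lra). lra.
  - assert (0 <= ln (ell (S j) x)) by (rewrite <- ln_1; apply ln_le; lra). lra.
Qed.

Lemma ell_1 : forall j, ell j 1 = 1.
Proof.
  intros j. induction j as [|j IH]; simpl; [lra|].
  destruct j as [|j].
  - rewrite ln_1; lra.
  - rewrite IH, ln_1; lra.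
Qed.

Lemma prod_ell_ge1 : forall k x, 1 <= x -> 1 <= prod_ell k x.
Proof.
  intros k x Hx; induction k; simpl; [lra|].
  pose proof (ell_ge1 k x Hx). nra.
Qed.

Lemma prod_ell_1 : forall k, prod_ell k 1 = 1.
Proof. intros k; induction k; simpl; [lra|]. rewrite IHk, ell_1; lra. Qed.

Lemma weight_pos : forall k n, (1 <= n)%nat -> 0 < weight k n.
Proof.
  intros k n Hn. unfold weight.
  assert (1 <= INR n) by (apply (le_INR 1); lia).
  pose proof (prod_ell_ge1 k (INR n) H). nra.
Qed.

Lemma weight_1 : forall k, weight k 1 = 1.
Proof. intros k; unfold weight; simpl INR. rewrite prod_ell_1; lra. Qed.

Lemma weight_nonneg : forall k n, 0 <= weight k n.
Proof.
  intros k n. destruct n. unfold weight; simpl; lra.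
  apply Rlt_le, weight_pos; lia.
Qed.

Lemma depth_pos (T : rooted_tree) v : v <> root T -> (1 <= depth T v)%nat.
Proof. intros H; rewrite (depth_par T v H); lia. Qed.

Lemma Cminus_0 (a b : C) : Cminus a b = 0 -> a = b.
Proof.
  destruct a as [a1 a2], b as [b1 b2]; unfold Cminus, Cplus, Copp; simpl.
  intros H; injection H; intros; f_equal; lra.
Qed.

Lemma lub2 (E : R -> Prop) a : 0 <= a -> (forall x, E x -> x = 0 \/ x = a) ->
  E a -> Lub_Rbar E = Finite a.
Proof.
  intros Ha H1 H2. apply is_lub_Rbar_unique. split.
  - intros x Hx; destruct (H1 x Hx); subst; simpl; lra.
  - intros b Hb. apply Hb, H2.
Qed.

Lemma lub_fin (E : R -> Prop) M : E 0 -> (forall x, E x -> x <= M) ->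
  exists r, Lub_Rbar E = Finite r /\ forall x, E x -> x <= r.
Proof.
  intros H0 HM. pose proof (Lub_Rbar_correct E) as [Hub Hl].
  assert (Hu : Rbar_le (Lub_Rbar E) M) by (apply Hl; intros x Hx; simpl; auto).
  pose proof (Hub 0 H0) as Hz.
  destruct (Lub_Rbar E) as [r| |] eqn:Heq; simpl in *; try contradiction. exists r; split; auto.
  all: intros x Hx; apply (Hub x Hx).
Qed.

Lemma Cmod_neg_eq (a : C) : Cmod (Cminus 0 a) = Cmod a.
Proof.
  replace (Cminus 0 a) with (Copp a). apply Cmod_opp.
  destruct a; unfold Cminus, Cplus, Copp; simpl; f_equal; lra.
Qed.

Lemma Cmult_minus (c a b : C) : Cminus (Cmult c a) (Cmult c b) = Cmult c (Cminus a b).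
Proof.
  destruct c, a, b; unfold Cminus, Cplus, Copp, Cmult; simpl; f_equal; ring.
Qed.

Lemma const_iso (T : rooted_tree) k (X : (vert T -> C) -> Prop) psi c :
  Cmod c = 1 -> (forall v, psi v = c) ->
  (forall f, X f -> X (fun v => Cmult (psi v) (f v))) ->
  isometric_mult T k X psi.
Proof.
  intros Hc Hp HX. split; auto.
  intros f _. unfold norm_k. rewrite Hp, Cmod_mult, Hc, Rmult_1_l.
  f_equal. f_equal. apply Lub_Rbar_eqset. intros x.
  assert (Hw : forall v, wD T k (fun v => Cmult (psi v) (f v)) v = wD T k f v).
  { intros v; unfold wD, Dif. rewrite !Hp, Cmult_minus, Cmod_mult, Hc, Rmult_1_l; auto. }
  split; intros [H|[v [H1 H2]]]; auto; right; exists v; split; auto;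
    rewrite H2, Hw; auto.
Qed.

Lemma wD_scal (T : rooted_tree) k f c v :
  wD T k (fun v => Cmult c (f v)) v = Cmod c * wD T k f v.
Proof. unfold wD, Dif. rewrite Cmult_minus, Cmod_mult; ring. Qed.

Lemma in_Lk_scal T k f c : in_Lk T k f -> in_Lk T k (fun v => Cmult c (f v)).
Proof.
  intros [M HM]. exists (Cmod c * M). intros v Hv. rewrite wD_scal.
  apply Rmult_le_compat_l; auto. apply Cmod_ge_0.
Qed.

Lemma in_Lk0_scal T k f c : in_Lk0 T k f -> in_Lk0 T k (fun v => Cmult c (f v)).
Proof.
  intros [H1 H2]. split. apply in_Lk_scal; auto.
  intros eps He. destruct (H2 (eps / (Cmod c + 1))) as [N HN].
  { pose proof (Cmod_ge_0 c). apply Rdiv_lt_0_compat; lra. }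
  exists N. intros v Hv Hd. rewrite wD_scal. specialize (HN v Hv Hd).
  pose proof (Cmod_ge_0 c).
  assert (0 <= wD T k f v) by (unfold wD, Dif; apply Rmult_le_pos; [apply weight_nonneg|apply Cmod_ge_0]).
  assert (wD T k f v * (Cmod c + 1) < eps).
  { apply (Rmult_lt_compat_r (Cmod c + 1)) in HN; [|lra].
    unfold Rdiv in HN; rewrite Rmult_assoc, Rinv_l in HN; lra. }
  nra.
Qed.

Definition ind (T : rooted_tree) (v : vert T) : C :=
  match excluded_middle_informative (v = root T) with
  | left _ => 1%C | right _ => 0%C end.

Lemma ind_root T : ind T (root T) = 1%C.
Proof. unfold ind; destruct excluded_middle_informative; congruence. Qed.
Lemma ind_nroot T v : v <> root T -> ind T v = 0%C.
Proof. unfold ind; destruct excluded_middle_informative; congruence. Qed.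

Lemma wD_ind T k (c : C) v : v <> root T ->
  (par T v = root T /\ wD T k (fun w => Cmult c (ind T w)) v = Cmod c) \/
  (wD T k (fun w => Cmult c (ind T w)) v = 0).
Proof.
  intros Hv. rewrite wD_scal. unfold wD, Dif. rewrite (ind_nroot T v Hv).
  destruct (classic (par T v = root T)) as [Hp|Hp].
  - left; split; auto. rewrite Hp, ind_root, Cmod_neg_eq, Cmod_1.
    rewrite (depth_par T v Hv), Hp, depth_root, weight_1. ring.
  - right. rewrite (ind_nroot T _ Hp). replace (Cminus (RtoC 0) (RtoC 0)) with (RtoC 0).
    rewrite Cmod_0; ring. unfold Cminus, Cplus, Copp, RtoC; simpl; f_equal; lra.
Qed.

Lemma ind_in T k : in_Lk0 T k (fun w => Cmult 1 (ind T w)).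
Proof.
  split.
  - exists 1. intros v Hv. destruct (wD_ind T k 1 v Hv) as [[_ H]|H]; rewrite H;
    rewrite ?Cmod_1; lra.
  - intros eps He. exists 2%nat. intros v Hv Hd.
    destruct (wD_ind T k 1 v Hv) as [[Hp H]|H]; rewrite ?H; try lra.
    rewrite (depth_par T v Hv), Hp, depth_root in Hd; lia.
Qed.

Lemma norm_ind T k c : norm_k T k (fun w => Cmult c (ind T w)) =
  Cmod c + (if excluded_middle_informative (exists v, v <> root T /\ par T v = root T)
            then Cmod c else 0).
Proof.
  unfold norm_k. rewrite ind_root, Cmult_1_r. f_equal.
  destruct excluded_middle_informative as [[v [Hv Hp]]|Hn].
  - rewrite (lub2 _ (Cmod c)); auto. apply Cmod_ge_0.
    + intros x [H|[w [Hw H]]]; auto. destruct (wD_ind T k c w Hw) as [[_ H']|H']; rewrite H; auto.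
    + right. exists v; split; auto. rewrite wD_scal. unfold wD, Dif.
      rewrite Hp, ind_root, (ind_nroot T v Hv), Cmod_neg_eq, Cmod_1,
        (depth_par T v Hv), Hp, depth_root, weight_1. ring.
  - rewrite (lub2 _ 0); auto. lra.
    intros x [H|[w [Hw H]]]; auto. destruct (wD_ind T k c w Hw) as [[Hp H']|H'].
    exfalso; apply Hn; eauto. rewrite H; auto.
Qed.

Lemma iso_const T k (X : (vert T -> C) -> Prop) psi :
  (forall f, X f -> in_Lk T k f) ->
  X (fun _ => 1%C) -> X (fun w => Cmult 1 (ind T w)) ->
  isometric_mult T k X psi -> exists c : C, Cmod c = 1 /\ forall v, psi v = c.
Proof.
  intros HXL H1 Hind [Hcl Hn].
  assert (Ho : Cmod (psi (root T)) = 1).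
  { specialize (Hn _ Hind). cbv beta in Hn.
    assert (E : (fun v => Cmult (psi v) (Cmult 1 (ind T v))) =
                (fun v => Cmult (psi (root T)) (ind T v))).
    { apply functional_extensionality; intros v. rewrite Cmult_1_l.
      destruct (classic (v = root T)) as [->|Hv]; auto.
      rewrite (ind_nroot T v Hv), !Cmult_0_r; auto. }
    rewrite E in Hn.
    assert (E2 : (fun v => Cmult 1 (ind T v)) = (fun v => Cmult 1 (ind T v))) by auto.
    rewrite !norm_ind, Cmod_1 in Hn.
    destruct excluded_middle_informative; lra. }
  specialize (Hn _ H1). cbv beta in Hn. specialize (HXL _ (Hcl _ H1)) as [M HM].
  destruct (lub_fin (fun x => x = 0 \/ exists v, v <> root T /\
       x = wD T k (fun v => Cmult (psi v) 1%C) v) (Rmax M 0)) as [r [Hr Hle]]; auto.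
  { intros x [->|[v [Hv ->]]]. apply Rmax_r. eapply Rle_trans; [apply HM; auto| apply Rmax_l]. }
  assert (H1n : norm_k T k (fun _ => 1%C) = 1).
  { unfold norm_k. rewrite (lub2 _ 0); simpl; auto. rewrite Cmod_1; lra. lra.
    intros x [H|[v [Hv H]]]; auto. left. rewrite H. unfold wD, Dif.
    replace (Cminus 1 1) with (RtoC 0). rewrite Cmod_0; ring.
    unfold Cminus, Cplus, Copp, RtoC; simpl; f_equal; lra. }
  rewrite H1n in Hn. unfold norm_k in Hn. rewrite Hr, Cmult_1_r, Ho in Hn. simpl in Hn.
  assert (Hpar : forall v, v <> root T -> psi v = psi (par T v)).
  { intros v Hv. assert (Hw := Hle _ (or_intror _ (ex_intro _ v (conj Hv eq_refl)))).
    simpl in Hw. unfold wD, Dif in Hw. rewrite !Cmult_1_r in Hw.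
    pose proof (weight_pos k _ (depth_pos T v Hv)).
    pose proof (Cmod_ge_0 (Cminus (psi v) (psi (par T v)))).
    apply Cminus_0, Cmod_eq_0. nra. }
  exists (psi (root T)); split; auto.
  assert (Hall : forall n v, (depth T v <= n)%nat -> psi v = psi (root T)).
  { induction n as [|n IH]; intros v Hd.
    - destruct (classic (v = root T)) as [->|Hv]; auto. pose proof (depth_pos T v Hv); lia.
    - destruct (classic (v = root T)) as [->|Hv]; auto. rewrite (Hpar v Hv).
      apply IH. rewrite (depth_par T v Hv) in Hd; lia. }
  intros v; apply (Hall (depth T v)); auto.
Qed.

Theorem theorem5p1 (T : rooted_tree) (k : nat) (psi : vert T -> C) :
  (isometric_mult T k (in_Lk T k) psi <->
     exists c : C, Cmod c = 1 /\ forall v, psi v = c) /\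
  (isometric_mult T k (in_Lk0 T k) psi <->
     exists c : C, Cmod c = 1 /\ forall v, psi v = c).
Proof.
  assert (Hone : in_Lk0 T k (fun _ => 1%C)).
  { assert (Hz : forall v, wD T k (fun _ => 1%C) v = 0).
    { intros v; unfold wD, Dif. replace (Cminus 1 1) with (RtoC 0). rewrite Cmod_0; ring.
      unfold Cminus, Cplus, Copp, RtoC; simpl; f_equal; lra. }
    split. exists 0; intros v _; rewrite Hz; lra.
    intros eps He; exists 0%nat; intros v _ _; rewrite Hz; lra. }
  split; split.
  - apply iso_const; auto. apply Hone. apply ind_in.
  - intros [c [Hc Hp]]. apply (const_iso _ _ _ _ c); auto.
    intros f Hf. replace (fun v => Cmult (psi v) (f v)) with (fun v => Cmult c (f v)).
    apply in_Lk_scal; auto. apply functional_extensionality; intros; rewrite Hp; auto.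
  - apply iso_const; auto. intros f [H _]; auto. apply ind_in.
  - intros [c [Hc Hp]]. apply (const_iso _ _ _ _ c); auto.
    intros f Hf. replace (fun v => Cmult (psi v) (f v)) with (fun v => Cmult c (f v)).
    apply in_Lk0_scal; auto. apply functional_extensionality; intros; rewrite Hp; auto.
Qed.
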